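(* In the setting of the context, assume every irreducible $T$-module is thin, and let $\mathbf{C}\in T$ be the unique element satisfying the three equations $$\mathbf{A}+\frac{q\mathbf{B}\mathbf{C}-q^{-1}\mathbf{C}\mathbf{B}}{q^2-q^{-2}}=\frac{(\mathbf{a}+\mathbf{a}^{-1})(\Lambda+\Lambda^{-1})+(\mathbf{b}+\mathbf{b}^{-1})(\mathbf{c}+\mathbf{c}^{-1})}{q+q^{-1}},$$ $$\mathbf{B}+\frac{q\mathbf{C}\mathbf{A}-q^{-1}\mathbf{A}\mathbf{C}}{q^2-q^{-2}}=\frac{(\mathbf{b}+\mathbf{b}^{-1})(\Lambda+\Lambda^{-1})+(\mathbf{c}+\mathbf{c}^{-1})(\mathbf{a}+\mathbf{a}^{-1})}{q+q^{-1}},$$ $$\mathbf{C}+\frac{q\mathbf{A}\mathbf{B}-q^{-1}\mathbf{B}\mathbf{A}}{q^2-q^{-2}}=\frac{(\mathbf{c}+\mathbf{c}^{-1})(\Lambda+\Lambda^{-1})+(\mathbf{a}+\mathbf{a}^{-1})(\mathbf{b}+\mathbf{b}^{-1})}{q+q^{-1}}.$$ Then each of $$\mathbf{A}+\frac{q\mathbf{B}\mathbf{C}-q^{-1}\mathbf{C}\mathbf{B}}{q^2-q^{-2}},\quad \mathbf{B}+\frac{q\mathbf{C}\mathbf{A}-q^{-1}\mathbf{A}\mathbf{C}}{q^2-q^{-2}},\quad \mathbf{C}+\frac{q\mathbf{A}\mathbf{B}-q^{-1}\mathbf{B}\mathbf{A}}{q^2-q^{-2}}$$ is central in $T$.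
   Context: Fix a nonzero $q\in\mathbb{C}$ with $q^4\neq1$. Let $\Gamma$ be a finite connected distance-regular graph (undirected, no loops or multiple edges) with vertex set $X$, distance $\partial$, diameter $D\ge3$; $V=\mathbb{C}^X$. $A$ is the adjacency matrix, $E_0,\dots,E_D$ the primitive idempotents of the Bose–Mesner algebra with $E_0=|X|^{-1}J$ and $E_1,\dots,E_D$ a $Q$-polynomial ordering; $A=\sum\theta_iE_i$. Fix a vertex $x$; $E_i^*$ is the diagonal $0/1$ matrix projecting onto vertices at distance $i$ from $x$; $A^*$ is diagonal with $(y,y)$-entry $|X|(E_1)_{xy}$, $A^*=\sum\theta_i^*E_i^*$; $T$ is the algebra generated by $A,A^*$. Assume $q$-Racah type: $\theta_i=w+uq^{2i-D}+vq^{D-2i}$, $\theta_i^*=w^*+u^*q^{2i-D}+v^*q^{D-2i}$, $u,u^*,v,v^*\neq0$; fix $a,b$ with $a^2=u/v$, $b^2=u^*/v^*$; $\mathbf{A}=(A-wI)/(av)$, $\mathbf{B}=(A^*-w^*I)/(bv^* )$. For an irreducible $T$-module $W\subseteq V$: endpoint $\rho=\min\{i:E_i^*W\ne0\}$, dual endpoint $\tau=\min\{i:E_iW\neq0\}$, diameter $d=|\{i:E^*_iW\ne0\}|-1$; thin means $\dim E^*_iW\le1$ for all $i$. Put $a(W)=aq^{2\tau+d-D}$, $b(W)=bq^{2\rho+d-D}$. If $W$ is thin, $(\mathbf{A}|_W,\{E_{\tau+i}|_W\}_{i=0}^d,\mathbf{B}|_W,\{E^*_{\rho+i}|_W\}_{i=0}^d)$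 is a Leonard system with eigenvalues $\vartheta_i=a(W)q^{2i-d}+a(W)^{-1}q^{d-2i}$ and dual eigenvalues $\vartheta^*_i=b(W)q^{2i-d}+b(W)^{-1}q^{d-2i}$; let $\kappa=0$ if $d=0$ and, for $d\ge1$, $\kappa=a(W)b(W)^{-1}q^{d-1}+a(W)^{-1}b(W)q^{1-d}+\phi_1/((q-q^{-1})(q^d-q^{-d}))$ where $\phi_1=(\vartheta^*_0-\vartheta^*_1)(\mathrm{trace}(E^*_\rho\mathbf{A}|_W)-\vartheta_d)$; $c(W)$ is a root of $\xi^2-\kappa\xi+1=0$ (defined up to reciprocal). Isomorphism of irreducible modules: linear bijection commuting with $T$; $\Psi$ = set of types; for $\psi\in\Psi$, $a(\psi),b(\psi),d(\psi),c(\psi)$ are $a(W),b(W)$, the diameter, and (a fixed choice of) $c(W)$ for $W$ of type $\psi$. $V_\psi$ = span of irreducible modules of type $\psi$, $V=\bigoplus_\psi V_\psi$, $e_\psi$ = identity on $V_\psi$, $0$ on other $V_\lambda$. Define $\mathbf{a}=\sum_\psi a(\psi)e_\psi$, $\mathbf{b}=\sum_\psi b(\psi)e_\psi$, $\mathbf{c}=\sum_\psi c(\psi)e_\psi$, $\Lambda=\sum_\psi q^{d(\psi)+1}e_\psi$ (these are invertible). *)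

(* Defs.v *)
From HB Require Import structures.
From mathcomp Require Import all_boot all_order all_algebra.
From mathcomp Require Import complex.
From mathcomp Require Import Rstruct.

Set Implicit Arguments.
Unset Strict Implicit.
Unset Printing Implicit Defensive.

Import Order.TTheory GRing.Theory Num.Theory.
Local Open Scope ring_scope.

Notation CC := (Rdefinitions.R[i]).

Section Graph.
Variable n : nat.
Variable adj : rel 'I_n.

(* undirected, no loops (no multiple edges is automatic for a relation) *)
Definition simple_graph : Prop := symmetric adj /\ irreflexive adj.

Fixpoint reach (k : nat) (y z : 'I_n) : bool :=
  match k with
  | 0 => y == z
  | k'.+1 => [exists t, adj y t && reach k' t z]
  end.

Definition connected_graph : Prop := forall y z, exists k, reach k y z.

(* path-length distance: the least k with a walk of length k from y to z
   (in a connected graph on n vertices this is < n) *)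
Definition dist (y z : 'I_n) : nat := find (fun k => reach k y z) (iota 0 n).

Definition diameter : nat := \max_(y : 'I_n) \max_(z : 'I_n) dist y z.

Definition distance_regular : Prop :=
  forall (i j : nat) (y z y' z' : 'I_n), dist y z = dist y' z' ->
    #|[set t | (dist y t == i) && (dist z t == j)]| =
    #|[set t | (dist y' t == i) && (dist z' t == j)]|.

Definition adjmx : 'M[CC]_n := \matrix_(y, z) (adj y z)%:R.
Definition distmx (i : nat) : 'M[CC]_n := \matrix_(y, z) (dist y z == i)%:R.

Definition inBM (M : 'M[CC]_n) : Prop :=
  exists c : nat -> CC, M = \sum_(i < diameter.+1) c i *: distmx i.

Definition BM_idempotent (F : 'M[CC]_n) : Prop := inBM F /\ F *m F = F.

Definition BM_primitive (E : 'M[CC]_n) : Prop :=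
  BM_idempotent E /\ E <> 0 /\
  forall F, BM_idempotent F -> F *m E = F -> F = 0 \/ F = E.

Definition primitive_idempotents (D : nat) (E : nat -> 'M[CC]_n) : Prop :=
  [/\ forall i, (i <= D)%N -> BM_primitive (E i),
      forall i j, (i <= D)%N -> (j <= D)%N -> E i = E j -> i = j,
      forall F, BM_primitive F -> exists2 i, (i <= D)%N & F = E i
    & E 0%N = (n%:R)^-1 *: const_mx 1].

Definition hadamard (M N : 'M[CC]_n) : 'M[CC]_n := \matrix_(y, z) (M y z * N y z).

Definition Q_polynomial (D : nat) (E : nat -> 'M[CC]_n) : Prop :=
  exists kr : nat -> nat -> nat -> CC,
    (forall i j, (i <= D)%N -> (j <= D)%N ->
       hadamard (E i) (E j) = (n%:R)^-1 *: \sum_(h < D.+1) kr h i j *: E h) /\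
    (forall h i j, (h <= D)%N -> (i <= D)%N -> (j <= D)%N ->
       ((i + j < h)%N \/ (h + j < i)%N \/ (h + i < j)%N -> kr h i j = 0) /\
       ((h = i + j)%N \/ (i = h + j)%N \/ (j = h + i)%N -> kr h i j != 0)).

Definition dual_idem (x : 'I_n) (i : nat) : 'M[CC]_n :=
  diag_mx (\row_z (dist x z == i)%:R).

Definition dual_adjmx (x : 'I_n) (E1 : 'M[CC]_n) : 'M[CC]_n :=
  diag_mx (\row_z (n%:R * E1 x z)).

End Graph.

(* Vectors of V = C^X are column vectors 'cV_n; a subspace W of V is   *)
(* represented (mxalgebra style) by a matrix U whose row space is      *)
(* { w^T : w \in W }.                                                  *)
Section Talg.
Variable n : nat.
Variables (A As : 'M[CC]_n).

Definition Tword (s : seq bool) : 'M[CC]_n :=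
  foldr (fun b M => (if b then A else As) *m M) 1%:M s.

Definition inT (M : 'M[CC]_n) : Prop :=
  exists s : seq (CC * seq bool), M = \sum_(p <- s) p.1 *: Tword p.2.

Definition central_in_T (M : 'M[CC]_n) : Prop :=
  inT M /\ forall N, inT N -> M *m N = N *m M.

Definition inW (U : 'M[CC]_n) (v : 'cV[CC]_n) : Prop := (v^T <= U)%MS.

(* U represents a T-module: M W \subseteq W for all M in T
   (M w in W  <->  w^T M^T in rowspace U) *)
Definition Tmodule (U : 'M[CC]_n) : Prop :=
  forall M, inT M -> (U *m M^T <= U)%MS.

Definition irreducible (U : 'M[CC]_n) : Prop :=
  [/\ Tmodule U, U != 0 &
      forall U' : 'M[CC]_n, Tmodule U' -> (U' <= U)%MS ->
        (U' == (0 : 'M[CC]_n))%MS \/ (U' == U)%MS].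

(* trace of the restriction to W of a linear map M with M W \subseteq W *)
Definition restr_trace (M U : 'M[CC]_n) : CC :=
  \tr (row_base U *m M^T *m pinvmx (row_base U)).

End Talg.

Section ModuleParams.
Variable n : nat.
Variables (D : nat) (E Es : nat -> 'M[CC]_n).

Definition dimEs (U : 'M[CC]_n) (i : nat) : nat := \rank (U *m (Es i)^T).
Definition dimE (U : 'M[CC]_n) (i : nat) : nat := \rank (U *m (E i)^T).

Definition endpoint (U : 'M[CC]_n) : nat :=
  find (fun i => dimEs U i != 0%N) (iota 0 D.+1).
Definition dual_endpoint (U : 'M[CC]_n) : nat :=
  find (fun i => dimE U i != 0%N) (iota 0 D.+1).
Definition mod_diameter (U : 'M[CC]_n) : nat :=
  (count (fun i => dimEs U i != 0%N) (iota 0 D.+1)).-1.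

Definition thin (U : 'M[CC]_n) : Prop := forall i, (dimEs U i <= 1)%N.

Variables (q a b : CC).

Definition aW (U : 'M[CC]_n) : CC :=
  a * q ^ ((2 * dual_endpoint U + mod_diameter U)%N%:Z - D%:Z).
Definition bW (U : 'M[CC]_n) : CC :=
  b * q ^ ((2 * endpoint U + mod_diameter U)%N%:Z - D%:Z).

Definition thW (U : 'M[CC]_n) (i : nat) : CC :=
  let d := mod_diameter U in
  aW U * q ^ ((2 * i)%N%:Z - d%:Z) + (aW U)^-1 * q ^ (d%:Z - (2 * i)%N%:Z).
Definition thsW (U : 'M[CC]_n) (i : nat) : CC :=
  let d := mod_diameter U in
  bW U * q ^ ((2 * i)%N%:Z - d%:Z) + (bW U)^-1 * q ^ (d%:Z - (2 * i)%N%:Z).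

Definition phi1 (bA U : 'M[CC]_n) : CC :=
  (thsW U 0 - thsW U 1) *
  (restr_trace (Es (endpoint U) *m bA) U - thW U (mod_diameter U)).

Definition kappa (bA U : 'M[CC]_n) : CC :=
  let d := mod_diameter U in
  if d == 0%N then 0 else
  aW U / bW U * q ^ (d%:Z - 1) + bW U / aW U * q ^ (1 - d%:Z) +
  phi1 bA U / ((q - q^-1) * (q ^+ d - q ^- d)).

End ModuleParams.

Definition normalize (n : nat) (M : 'M[CC]_n) (w s : CC) : 'M[CC]_n :=
  s^-1 *: (M - w%:M).

(* Main.v *)
Require Import Defs.
From HB Require Import structures.
From mathcomp Require Import all_boot all_order all_algebra.
From mathcomp Require Import complex.
From mathcomp Require Import Rstruct.
From Stdlib Require Import Classical.
From mathcomp Require Import zify.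
Import Order.TTheory GRing.Theory Num.Theory Num.Def.
Local Open Scope ring_scope.
Set Implicit Arguments.
Unset Strict Implicit.

Section TClosure.
Variable n : nat.
Variables (A As : 'M[CC]_n).
Local Notation inT := (inT A As).
Local Notation Tword := (Tword A As).

Lemma Tword_cat s1 s2 : Tword (s1 ++ s2) = Tword s1 *m Tword s2.
Proof. by elim: s1 => [|b s IH] /=; rewrite ?mul1mx // IH mulmxA. Qed.

Lemma inT0 : inT 0.
Proof. by exists [::]; rewrite big_nil. Qed.

Lemma inTD M N : inT M -> inT N -> inT (M + N).
Proof. by move=> [s ->] [t ->]; exists (s ++ t); rewrite big_cat. Qed.

Lemma inTZ k M : inT M -> inT (k *: M).
Proof.
move=> [s ->]; exists [seq (k * p.1, p.2) | p <- s].
rewrite big_map scaler_sumr; apply: eq_bigr => p _ /=; by rewrite scalerA.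
Qed.

Lemma inTW s : inT (Tword s).
Proof. by exists [:: (1, s)]; rewrite big_seq1 scale1r. Qed.

Lemma inTN M : inT M -> inT (- M).
Proof. by move=> h; rewrite -scaleN1r; apply: inTZ. Qed.

Lemma inTB M N : inT M -> inT N -> inT (M - N).
Proof. by move=> h1 h2; apply: inTD => //; apply: inTN. Qed.

Lemma inTWM s N : inT N -> inT (Tword s *m N).
Proof.
move=> [t ->]; rewrite mulmx_sumr.
elim: t => [|p t IH]; first by rewrite big_nil; apply: inT0.
rewrite big_cons; apply: inTD => //.
by rewrite -scalemxAr -Tword_cat; apply/inTZ/inTW.
Qed.

Lemma inTM M N : inT M -> inT N -> inT (M *m N).
Proof.
move=> [s ->] hN; rewrite mulmx_suml.
elim: s => [|p s IH]; first by rewrite big_nil; apply: inT0.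
rewrite big_cons; apply: inTD => //.
by rewrite -scalemxAl; apply/inTZ/inTWM.
Qed.

Lemma inTA : inT A.
Proof. by have := inTW [:: true]; rewrite /= mulmx1. Qed.
Lemma inTAs : inT As.
Proof. by have := inTW [:: false]; rewrite /= mulmx1. Qed.
Lemma inT1 : inT 1%:M.
Proof. exact: (inTW [::]). Qed.
Lemma inTs c : inT c%:M.
Proof. by rewrite -scalemx1; apply/inTZ/inT1. Qed.

Definition adjH (M : 'M[CC]_n) := (map_mx conjC M)^T.

Lemma adjHM M N : adjH (M *m N) = adjH N *m adjH M.
Proof. by rewrite /adjH map_mxM trmx_mul. Qed.

Hypothesis hA : inT (adjH A).
Hypothesis hAs : inT (adjH As).

Lemma inT_adjW s : inT (adjH (Tword s)).
Proof.
elim: s => [|b s IH] /=.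
  rewrite /adjH map_mx1 trmx1; exact: inT1.
by rewrite adjHM; apply: inTM => //; case: b.
Qed.

Lemma inT_adj M : inT M -> inT (adjH M).
Proof.
move=> [s ->]; elim: s => [|p s IH].
  rewrite big_nil /adjH map_mx0 trmx0; exact: inT0.
rewrite big_cons /adjH map_mxD linearD; apply: inTD => //.
rewrite map_mxZ linearZ /=; apply/inTZ/inT_adjW.
Qed.

End TClosure.
Section Decomp.
Variable n : nat.
Variables (A As : 'M[CC]_n).
Local Notation inT := (inT A As).
Local Notation adjH := (@adjH n).
Hypothesis hadj : forall M, inT M -> inT (adjH M).

Local Notation cj := (map_mx conjC).

Lemma cjK m p (M : 'M[CC]_(m, p)) : cj (cj M) = M.
Proof. by apply/matrixP => i j; rewrite !mxE conjCK. Qed.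

Lemma module_perp (U : 'M[CC]_n) : Tmodule A As U ->
  Tmodule A As (kermx (cj U)^T).
Proof.
move=> hU M hM.
have := hU _ (hadj hM); rewrite /adjH trmxK => /submxP [Y hY].
rewrite sub_kermx -mulmxA -trmx_mul.
have -> : cj U *m M = cj Y *m cj U.
  by rewrite -[in LHS](cjK M) -map_mxM hY map_mxM.
by rewrite trmx_mul mulmxA mulmx_ker mul0mx.
Qed.

Lemma perp_row0 (U : 'M[CC]_n) (v : 'rV[CC]_n) :
  (v <= U)%MS -> (v <= kermx (cj U)^T)%MS -> v = 0.
Proof.
move=> /submxP [w ->] /sub_kermxP h.
have h2 : (w *m U) *m (cj (w *m U))^T = 0 by rewrite map_mxM trmx_mul mulmxA h mul0mx.
have h3 : \sum_j (w *m U) 0 j * ((w *m U) 0 j)^* = 0.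
  have e := congr1 (fun M : 'M[CC]_1 => M ord0 ord0) h2; rewrite /= !mxE in e; rewrite -[RHS]e.
  by apply: eq_bigr => j _; rewrite !mxE.
apply/rowP => j; rewrite [RHS]mxE.
have := @psumr_eq0P _ _ predT (fun i => (w *m U) 0 i * ((w *m U) 0 i)^*) (fun i _ => mul_conjC_ge0 _) h3 j isT.
by move=> /eqP; rewrite mul_conjC_eq0 => /eqP.
Qed.

Lemma perp_cap0 (U : 'M[CC]_n) m (X : 'M[CC]_(m, n)) :
  (X <= U)%MS -> (X <= kermx (cj U)^T)%MS -> X = 0.
Proof.
move=> h1 h2; apply/row_matrixP => i; rewrite row0.
by apply: (perp_row0 (submx_trans (row_sub i X) h1) (submx_trans (row_sub i X) h2)).
Qed.

Lemma decomp (K : 'M[CC]_n) :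
  (forall U, irreducible A As U -> forall z, inW U z -> K *m z = 0) -> K = 0.
Proof.
move=> hK.
suff main : forall k (U : 'M[CC]_n), (\rank U <= k)%N -> Tmodule A As U ->
    (U <= kermx K^T)%MS.
  have h1 : Tmodule A As 1%:M by move=> M _; apply: submx1.
  have := main n 1%:M (rank_leq_col _) h1.
  move/sub_kermxP; rewrite mul1mx => h.
  by rewrite -(trmxK K) h trmx0.
elim=> [|k IH] U hr hU.
  by move: hr; rewrite leqn0 mxrank_eq0 => /eqP ->; rewrite sub0mx.
case: (boolP (U == 0)) => [/eqP ->|Unz]; first by rewrite sub0mx.
case: (classic (irreducible A As U)) => [hirr|hnirr].
  apply/row_subP => i; rewrite sub_kermx; apply/eqP.
  apply: trmx_inj; rewrite trmx_mul trmxK trmx0.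
  by apply: (hK U hirr); rewrite /inW trmxK row_sub.
have [U' [hU' sU' nz' ne']] : exists U', [/\ Tmodule A As U', (U' <= U)%MS,
    ~ (U' == (0 : 'M[CC]_n))%MS & ~ (U' == U)%MS].
  apply: NNPP => hne; apply: hnirr; split => // U' h1 h2.
  apply: NNPP => hno; apply: hne; exists U'; split => //.
    by move=> h; apply: hno; left.
  by move=> h; apply: hno; right.
set P := kermx (cj U')^T.
set U2 := (U :&: P)%MS.
have hP : Tmodule A As P by apply: module_perp.
have hU2 : Tmodule A As U2.
  move=> M hM; rewrite sub_capmx; apply/andP; split.
    exact: submx_trans (submxMr _ (capmxSl _ _)) (hU _ hM).
  exact: submx_trans (submxMr _ (capmxSr _ _)) (hP _ hM).
have lt1 : (\rank U' < \rank U)%N.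
  apply: rank_ltmx; rewrite ltmxEneq sU' /=; apply/negP => h; apply: ne'.
  by apply/andP; split.
have cap0 : (U' :&: U2 = 0)%MS.
  apply: (@perp_cap0 U'); first exact: capmxSl.
  exact: submx_trans (capmxSr _ _) (capmxSr _ _).
have lt2 : (\rank U2 < \rank U)%N.
  apply: rank_ltmx; rewrite ltmxEneq capmxSl /=; apply/negP => h.
  apply: nz'; apply/andP; split; last exact: sub0mx. rewrite submx0; apply/eqP.
  apply: (@perp_cap0 U'); first exact: submx_refl.
  exact: submx_trans sU' (submx_trans h (capmxSr _ _)).
have rP : \rank P = (n - \rank U')%N by rewrite mxrank_ker mxrank_tr mxrank_map.
have r2 := mxrank_sum_cap U P.
have r3 : (\rank (U + P)%MS <= n)%N := rank_leq_col _.
have r4 := mxrank_sum_cap U' U2.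
rewrite cap0 mxrank0 in r4.
have r5 : (\rank U' <= n)%N := rank_leq_col _.
have sub12 : (U' + U2 <= U)%MS by rewrite addsmx_sub sU' capmxSl.
have hle : (U <= U' + U2)%MS.
  rewrite -(mxrank_leqif_sup sub12).2.
  rewrite -/U2 in r2; apply/eqP; apply/anti_leq/andP; split.
    exact: mxrankS.
  rewrite rP in r2; rewrite addn0 in r4; rewrite r4. move: r2 r3 r5; set x := \rank (U + P)%MS; move=> r2 r3 r5. lia.
apply: submx_trans hle _; rewrite addsmx_sub; apply/andP; split.
  by apply: IH => //; lia.
by apply: IH => //; lia.
Qed.

End Decomp.

Lemma interp (f : CC -> CC) (s : seq CC) :
  exists p : {poly CC}, forall x, x \in s -> p.[x] = f x.
Proof.
elim: s => [|y s [p hp]]; first by exists 0.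
case: (boolP (y \in s)) => ys.
  by exists p => x; rewrite inE => /orP [/eqP ->|]; auto.
set g := \prod_(z <- s) ('X - z%:P).
have gy : g.[y] != 0 by rewrite -rootE root_prod_XsubC.
exists (p + ((f y - p.[y]) / g.[y]) *: g) => x.
rewrite inE hornerD hornerZ => /orP [/eqP ->|xs].
  by rewrite divfK // addrC subrK.
have : root g x by rewrite root_prod_XsubC.
by rewrite rootE => /eqP ->; rewrite mulr0 addr0 hp.
Qed.

Lemma inT_sumI (n : nat) (A As : 'M[CC]_n) m (F : 'I_m -> 'M[CC]_n) :
  (forall i, inT A As (F i)) -> inT A As (\sum_(i < m) F i).
Proof.
move=> h; elim/big_ind: _ => //; first exact: inT0.
exact: inTD.
Qed.

Lemma inT_diag (n : nat) (A : 'M[CC]_n) (r : 'rV[CC]_n) (f : CC -> CC) :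
  inT A (diag_mx r) (diag_mx (\row_z f (r 0 z))).
Proof.
have [p hp] := interp f [seq r 0 z | z : 'I_n].
have hw : forall i, Tword A (diag_mx r) (nseq i false) = diag_mx (\row_z (r 0 z) ^+ i).
  elim=> [|i IH] /=.
    by apply/matrixP => y z; rewrite !mxE expr0.
  rewrite IH mul_diag_mx; apply/matrixP => y z; rewrite !mxE exprS.
  by case: (y == z); rewrite ?mulr0 ?mulr1n ?mulr0n.
have -> : diag_mx (\row_z f (r 0 z)) =
    \sum_(i < size p) p`_i *: Tword A (diag_mx r) (nseq i false).
  apply/matrixP => y z; rewrite summxE !mxE -hp; last by apply: map_f; rewrite mem_enum.
  rewrite horner_coef; case: eqP => [->|/eqP ne].
    by rewrite mulr1n; apply: eq_bigr => i _; rewrite hw !mxE eqxx mulr1n.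
  by rewrite mulr0n big1 // => i _; rewrite hw !mxE (negbTE ne) mulr0n mulr0.
by apply: inT_sumI => i; apply/inTZ/inTW.
Qed.

Section Scal.
Variable n : nat.
Variables (A As : 'M[CC]_n).
Local Notation inT := (inT A As).
Hypothesis hadj : forall M, inT M -> inT (adjH M).

Definition acts (U X : 'M[CC]_n) (s : CC) :=
  forall z, inW U z -> X *m z = s *: z.

Definition NS (X : 'M[CC]_n) :=
  forall U, irreducible A As U -> exists2 s, s != 0 & acts U X s.

Lemma actsD U X Y s t : acts U X s -> acts U Y t -> acts U (X + Y) (s + t).
Proof. by move=> h1 h2 z hz; rewrite mulmxDl h1 // h2 // scalerDl. Qed.

Lemma actsM U X Y s t : acts U X s -> acts U Y t -> acts U (X *m Y) (s * t).
Proof.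
move=> h1 h2 z hz; rewrite -mulmxA h2 // -scalemxAr h1 // scalerA mulrC //.
Qed.

Lemma actsZ U X k s : acts U X s -> acts U (k *: X) (k * s).
Proof. by move=> h z hz; rewrite -scalemxAl h // scalerA. Qed.

Lemma NS_unit X : NS X -> X \in unitmx.
Proof.
move=> hX; rewrite -row_free_unit -kermx_eq0; apply/eqP.
apply: (decomp hadj) => U hU z hz.
have [s s0 hs] := hX U hU.
have -> : z = s^-1 *: (X *m z) by rewrite hs // scalerA mulVf // scale1r.
by rewrite -scalemxAr mulmxA mulmx_ker mul0mx scaler0.
Qed.

Lemma acts_inv U X s : X \in unitmx -> s != 0 -> acts U X s -> acts U (invmx X) s^-1.
Proof.
move=> hu s0 h z hz.
have e : s^-1 *: (X *m z) = z by rewrite h // scalerA mulVf // scale1r.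
by rewrite -[in LHS]e -scalemxAr mulKmx.
Qed.

Lemma acts_sinv U X s : X \in unitmx -> s != 0 -> acts U X s ->
  acts U (X + invmx X) (s + s^-1).
Proof. by move=> hu s0 h; apply: actsD => //; apply: acts_inv. Qed.

Lemma rhs_acts (k : CC) P Q R S : NS P -> NS Q -> NS R -> NS S ->
  forall U, irreducible A As U -> exists s,
    acts U (k *: ((P + invmx P) *m (Q + invmx Q) + (R + invmx R) *m (S + invmx S))) s.
Proof.
move=> hP hQ hR hS U hU.
have [p p0 hp] := hP U hU; have [q0 q00 hq] := hQ U hU.
have [r r0 hr] := hR U hU; have [t t0 ht] := hS U hU.
exists (k * ((p + p^-1) * (q0 + q0^-1) + (r + r^-1) * (t + t^-1))).
apply: actsZ; apply: actsD; apply: actsM; apply: acts_sinv => //; exact: NS_unit.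
Qed.


Lemma central_of X : inT X ->
  (forall U, irreducible A As U -> exists s, acts U X s) -> central_in_T A As X.
Proof.
move=> hX hY; split => // N hN; apply/eqP; rewrite -subr_eq0; apply/eqP.
apply: (decomp hadj) => U hU z hz.
have [s hs] := hY U hU.
have hNz : inW U (N *m z).
  case: hU => hmod _ _; rewrite /inW trmx_mul.
  exact: submx_trans (submxMr _ hz) (hmod _ hN).
by rewrite mulmxBl -!mulmxA hs // hs // -scalemxAr subrr.
Qed.

End Scal.

Theorem theorem5p13
  (n : nat) (adj : rel 'I_n) (x : 'I_n) (D : nat) (E : nat -> 'M[CC]_n)
  (q w u v ws us vs a b : CC)
  (ba bb bc bL bC : 'M[CC]_n) :
  (* distance-regular graph of diameter D >= 3 *)
  simple_graph adj -> connected_graph adj -> distance_regular adj ->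
  diameter adj = D -> (3 <= D)%N ->
  (* E_0 = |X|^-1 J, E_1, ..., E_D primitive idempotents, Q-polynomial ordering *)
  primitive_idempotents adj D E -> Q_polynomial D E ->
  (* q nonzero, q^4 <> 1 *)
  q != 0 -> q ^+ 4 != 1 ->
  (* q-Racah type *)
  u != 0 -> us != 0 -> v != 0 -> vs != 0 ->
  adjmx adj = \sum_(i < D.+1)
      (w + u * q ^ ((2 * i)%N%:Z - D%:Z) + v * q ^ (D%:Z - (2 * i)%N%:Z)) *: E i ->
  dual_adjmx x (E 1%N) = \sum_(i < D.+1)
      (ws + us * q ^ ((2 * i)%N%:Z - D%:Z) + vs * q ^ (D%:Z - (2 * i)%N%:Z))
        *: dual_idem adj x i ->
  a ^+ 2 = u / v -> b ^+ 2 = us / vs ->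
  let A := adjmx adj in
  let As := dual_adjmx x (E 1%N) in
  let Es := dual_idem adj x in
  let bA := normalize A w (a * v) in
  let bB := normalize As ws (b * vs) in
  (* every irreducible T-module is thin *)
  (forall U, irreducible A As U -> thin Es U) ->
  (* bold a = sum_psi a(psi) e_psi : acts on each irreducible W as a(W) *)
  (forall U, irreducible A As U -> forall z, inW U z ->
     ba *m z = aW D E Es q a U *: z) ->
  (* bold b = sum_psi b(psi) e_psi *)
  (forall U, irreducible A As U -> forall z, inW U z ->
     bb *m z = bW D Es q b U *: z) ->
  (* bold c = sum_psi c(psi) e_psi, c(psi) a root of xi^2 - kappa xi + 1 *)
  (forall U, irreducible A As U -> exists2 c : CC,
     c ^+ 2 - kappa D E Es q a b bA U * c + 1 = 0 &
     forall z, inW U z -> bc *m z = c *: z) ->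
  (* Lambda = sum_psi q^{d(psi)+1} e_psi *)
  (forall U, irreducible A As U -> forall z, inW U z ->
     bL *m z = q ^+ (mod_diameter D Es U).+1 *: z) ->
  (* bold C in T satisfying the three equations *)
  inT A As bC ->
  bA + (q ^+ 2 - q ^- 2)^-1 *: (q *: (bB *m bC) - q^-1 *: (bC *m bB)) =
    (q + q^-1)^-1 *: ((ba + invmx ba) *m (bL + invmx bL)
                      + (bb + invmx bb) *m (bc + invmx bc)) ->
  bB + (q ^+ 2 - q ^- 2)^-1 *: (q *: (bC *m bA) - q^-1 *: (bA *m bC)) =
    (q + q^-1)^-1 *: ((bb + invmx bb) *m (bL + invmx bL)
                      + (bc + invmx bc) *m (ba + invmx ba)) ->
  bC + (q ^+ 2 - q ^- 2)^-1 *: (q *: (bA *m bB) - q^-1 *: (bB *m bA)) =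
    (q + q^-1)^-1 *: ((bc + invmx bc) *m (bL + invmx bL)
                      + (ba + invmx ba) *m (bb + invmx bb)) ->
  [/\ central_in_T A As
        (bA + (q ^+ 2 - q ^- 2)^-1 *: (q *: (bB *m bC) - q^-1 *: (bC *m bB))),
      central_in_T A As
        (bB + (q ^+ 2 - q ^- 2)^-1 *: (q *: (bC *m bA) - q^-1 *: (bA *m bC)))
    & central_in_T A As
        (bC + (q ^+ 2 - q ^- 2)^-1 *: (q *: (bA *m bB) - q^-1 *: (bB *m bA)))].
Proof.
move=> hsg hconn hdr hdiam hD hprim hQ q0 q4 u0 us0 v0 vs0 hAe hAse ha hb
  A As Es bA bB hthin hba hbb hbc hbL hC e1 e2 e3.
have hadj : forall M, inT A As M -> inT A As (adjH M).
  apply: inT_adj.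
    have -> : adjH A = A.
      apply/matrixP => i j; rewrite /A /adjmx !mxE conjC_nat.
      by rewrite (proj1 hsg j i).
    exact: inTA.
  have -> : adjH As = diag_mx (\row_z conjC ((\row_z (n%:R * E 1%N x z)) 0 z)).
    apply/matrixP => i j; rewrite /As /dual_adjmx !mxE.
    case: (eqVneq i j) => [->|ne]; first by rewrite !mulr1n.
    by rewrite ?(negbTE ne) !mulr0n conjC0.
  exact: inT_diag.
have a0 : a != 0.
  apply/eqP => a0; move: ha; rewrite a0 expr0n /= => /esym /eqP.
  by rewrite mulf_eq0 invr_eq0 (negbTE u0) (negbTE v0).
have b0 : b != 0.
  apply/eqP => b0; move: hb; rewrite b0 expr0n /= => /esym /eqP.
  by rewrite mulf_eq0 invr_eq0 (negbTE us0) (negbTE vs0).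
have qz : forall z : int, q ^ z != 0.
  by move=> z; rewrite expfz_eq0 (negbTE q0) andbF.
have Na : NS A As ba.
  move=> U hU; exists (aW D E Es q a U); last exact: hba.
  by rewrite /aW mulf_neq0.
have Nb : NS A As bb.
  move=> U hU; exists (bW D Es q b U); last exact: hbb.
  by rewrite /bW mulf_neq0.
have Nc : NS A As bc.
  move=> U hU; have [c hc hz] := hbc U hU; exists c => //.
  apply/eqP => c0; move: hc; rewrite c0 expr0n mulr0 subr0 add0r => /eqP.
  by rewrite oner_eq0.
have NL : NS A As bL.
  move=> U hU; exists (q ^+ (mod_diameter D Es U).+1); last exact: hbL.
  exact: expf_neq0.
have iA : inT A As bA.
  by rewrite /bA /normalize; apply/inTZ/inTB; [exact: inTA | exact: inTs].
have iB : inT A As bB.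
  by rewrite /bB /normalize; apply/inTZ/inTB; [exact: inTAs | exact: inTs].
split; apply: (central_of hadj).
- apply: inTD => //; apply/inTZ/inTB; apply: inTZ; exact: inTM.
- by rewrite e1; apply: rhs_acts.
- apply: inTD => //; apply/inTZ/inTB; apply: inTZ; exact: inTM.
- by rewrite e2; apply: rhs_acts.
- apply: inTD => //; apply/inTZ/inTB; apply: inTZ; exact: inTM.
- by rewrite e3; apply: rhs_acts.
Qed.
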